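(* Let $M$ be a mechanism for a combinatorial auction setting with item set $[m]$, and let $V,V'$ be classes of valuations on $2^{[m]}$. If $M$ is $(\lambda,\mu)$-smooth for the class $V'$ and $V$ is pointwise $\beta$-approximated by $V'$ (for some $\beta\ge1$), then $M$ is $(\lambda/\beta,\mu)$-smooth for the class $V$.
   Context: In a mechanism, each bidder $i$ chooses a strategy $b_i$; the outcome of a strategy profile $b$ gives $i$ a set $S_i(b)$ (the sets being disjoint) and a payment $P_i(b)$, with quasi-linear utility $u_i(b;v_i)=v_i(S_i(b))-P_i(b)$. $SW(\mathrm{OPT}(v))=\max\{\sum_iv_i(S_i):(S_i)\text{ a partition of }[m]\}$. A mechanism is $(\lambda,\mu)$-smooth for a valuation class $V$ if for every valuation profile $v$ with all $v_i\in V$ there exist deviation mappings $b_i'$ from strategies of $i$ to strategies of $i$ (depending on $v$) such that for every strategy profile $b$: $\sum_iu_i(b_i'(b_i),b_{-i};v_i)\ge\lambda SW(\mathrm{OPT}(v))-\mu\sum_iP_i(b)$. A valuation class $V$ is pointwise $\beta$-approximated by a class $V'$ if for every $v\in V$ and every $S\subseteq[m]$ there exists $v'\in V'$ (which may depend on $S$) with $\beta v'(S)\ge v(S)$ and $v(T)\ge v'(T)$ for all $T\subseteq[m]$. *)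

(* Defs.v *)
From HB Require Import structures.
From mathcomp Require Import all_boot all_order all_algebra.
Set Implicit Arguments. Unset Strict Implicit. Unset Printing Implicit Defensive.
Import Order.TTheory GRing.Theory Num.Theory.
Local Open Scope ring_scope.

Definition valuation (R : realFieldType) (m : nat) := {set 'I_m} -> R.

(* A mechanism for n bidders and m items: bidder i has strategy space B i;
   a strategy profile b : forall i, B i yields disjoint sets S_i(b) and
   payments P_i(b). *)
Record mechanism (R : realFieldType) (n m : nat) (B : 'I_n -> Type) := Mechanism {
  alloc : (forall i, B i) -> 'I_n -> {set 'I_m};
  pay   : (forall i, B i) -> 'I_n -> R;
  alloc_disjoint : forall b (i j : 'I_n), i != j -> [disjoint alloc b i & alloc b j]
}.

Definition utility R n m B (M : @mechanism R n m B) (b : forall i, B i)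
  (i : 'I_n) (vi : valuation R m) : R :=
  vi (alloc M b i) - pay M b i.

(* Social welfare of the partition of [m] given by assigning each item
   to a bidder (part S_i = items assigned to i). *)
Definition part_sw R n m (v : 'I_n -> valuation R m) (f : {ffun 'I_m -> 'I_n}) : R :=
  \sum_(i < n) v i [set j | f j == i].

(* SW(OPT(v)) = max over partitions of [m] into n labelled parts.
   If there is no partition at all (n = 0 < m) we set it to 0. *)
Definition sw_opt R n m (v : 'I_n -> valuation R m) : R :=
  match [pick f : {ffun 'I_m -> 'I_n}] with
  | Some f0 => \big[Num.max/part_sw v f0]_(f : {ffun 'I_m -> 'I_n}) part_sw v f
  | None => 0
  end.

Definition smooth R n m B (M : @mechanism R n m B)
  (V : valuation R m -> Prop) (lam mu : R) : Prop :=
  forall v : 'I_n -> valuation R m, (forall i, V (v i)) ->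
  exists b' : forall i, B i -> B i,
  forall b : forall i, B i,
    \sum_(i < n) utility M (dfwith b (b' i (b i))) i (v i)
      >= lam * sw_opt v - mu * \sum_(i < n) pay M b i.

Definition pointwise_approx R m (V V' : valuation R m -> Prop) (beta : R) : Prop :=
  forall v, V v -> forall S : {set 'I_m},
  exists v', V' v' /\ beta * v' S >= v S /\ (forall T, v T >= v' T).

(* Main.v *)
Require Import Defs.
From HB Require Import structures.
From mathcomp Require Import all_boot all_order all_algebra.
From Stdlib Require Import IndefiniteDescription.
Import Order.TTheory GRing.Theory Num.Theory.
Local Open Scope ring_scope.

Section Aux.
Variables (R : realFieldType) (T : eqType) (F : T -> R).

Lemma bigmax_seq_ge (s : seq T) (x0 : R) (t : T) :
  t \in s -> F t <= \big[Num.max/x0]_(i <- s) F i.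
Proof.
elim: s => [//|a s IH]; rewrite in_cons big_cons => /orP[/eqP->|/IH H].
  by rewrite le_max lexx.
by rewrite le_max H orbT.
Qed.

Lemma bigmax_seq_ex (s : seq T) (t0 : T) :
  exists t, \big[Num.max/F t0]_(i <- s) F i = F t.
Proof.
elim: s => [|a s [t IH]]; first by exists t0; rewrite big_nil.
rewrite big_cons IH.
case: (leP (F a) (F t)) => H.
- by exists t.
- by exists a.
Qed.
End Aux.

Lemma choose_v' (R : realFieldType) (n m : nat) (V V' : valuation R m -> Prop)
  (beta : R) (v : 'I_n -> valuation R m) (S : 'I_n -> {set 'I_m}) :
  (forall i, V (v i)) -> pointwise_approx V V' beta ->
  exists v' : 'I_n -> valuation R m, forall i,
    V' (v' i) /\ beta * v' i (S i) >= v i (S i) /\ (forall T, v i T >= v' i T).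
Proof.
move=> Vv Ha.
exists (fun i => proj1_sig (constructive_indefinite_description _ (Ha _ (Vv i) (S i)))).
move=> i; exact: (proj2_sig (constructive_indefinite_description _ (Ha _ (Vv i) (S i)))).
Qed.

Arguments choose_v' {R n m V V' beta v} S.

Theorem mainTheorem11 (R : realFieldType) (n m : nat) (B : 'I_n -> Type)
  (M : @mechanism R n m B) (V V' : valuation R m -> Prop) (lam mu beta : R) :
  0 <= lam -> 1 <= beta ->
  smooth M V' lam mu -> pointwise_approx V V' beta ->
  smooth M V (lam / beta) mu.
Proof.
move=> lam0 beta1 Hs Ha v Vv.
have beta0 : 0 < beta by apply: lt_le_trans beta1.
case E: [pick f : {ffun 'I_m -> 'I_n}] => [f0|].
- have [fo Hfo] : exists fo, sw_opt v = part_sw v fo.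
    rewrite /sw_opt E; exact: bigmax_seq_ex.
  have [v' Hv'] := choose_v' (fun i => [set j | fo j == i]) Vv Ha.
  have [b' Hb'] := Hs v' (fun i => (Hv' i).1).
  exists b' => b.
  apply: le_trans (le_trans _ (Hb' b)) _.
  + apply: lerB => //.
    have : part_sw v' fo <= sw_opt v'.
      rewrite /sw_opt E; apply: bigmax_seq_ge; exact: mem_index_enum.
    move=> Hle.
    have Hp : part_sw v fo <= beta * part_sw v' fo.
      rewrite /part_sw mulr_sumr; apply: ler_sum => i _; exact: (Hv' i).2.1.
    rewrite Hfo; apply: le_trans (ler_wpM2l lam0 Hle).
    rewrite -mulrA; apply: ler_wpM2l => //.
    by rewrite mulrC ler_pdivrMr // mulrC.
  + apply: ler_sum => i _; rewrite /utility lerB //; exact: (Hv' i).2.2.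
- have [v' Hv'] := choose_v' (fun i => set0) Vv Ha.
  have [b' Hb'] := Hs v' (fun i => (Hv' i).1).
  exists b' => b.
  apply: le_trans (le_trans _ (Hb' b)) _.
  + rewrite /sw_opt E !mulr0 lexx //.
  + apply: ler_sum => i _; rewrite /utility lerB //; exact: (Hv' i).2.2.
Qed.
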